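(* Let $I=(c,d)$ and $J$ be open intervals of $\mathbb{R}$ with $c\in\mathbb{R}$, let $O=I\times J$, and let $L:O\to\mathbb{R}$, $(x,y)\mapsto L(x,y)$, be of class $C^1$. Let $a<b$, $\alpha,\beta\in\mathbb{R}$, and let $X$ be the set of all $\gamma\in C([a,b])$ which are continuously differentiable on $(a,b]$, satisfy $(\gamma(t),\gamma'(t))\in O$ for all $t\in(a,b]$, $\gamma(a)=\alpha$, $\gamma(b)=\beta$, and for which the (possibly improper) integral $\mathcal{L}(\gamma)=\int_a^b L(\gamma(t),\gamma'(t))\,dt$ is defined. Suppose that $L$ is convex (resp. strictly convex) on $O$, that $\frac{\partial L}{\partial y}$ is bounded on $O$, and that $\gamma\in X$ satisfies the Euler–Lagrange equation $$\frac{\partial L}{\partial x}(\gamma(t),\gamma'(t))=\frac{d}{dt}\,\frac{\partial L}{\partial y}(\gamma(t),\gamma'(t))\quad\text{for all } t\in(a,b].$$ Then $\gamma$ is a minimum (resp. the unique minimum) of $\mathcal{L}$ on $X$.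
   Context: $L$ is called convex on $O$ if for all $x\in O$ and $h\in\mathbb{R}^2$ with $x+h\in O$, one has $L(x+h)-L(x)\ge \frac{\partial L}{\partial x_1}(x)h_1+\frac{\partial L}{\partial x_2}(x)h_2$; it is strictly convex if, in addition, equality holds only when $h=0$. *)

(* Defs.v *)
From Stdlib Require Import Reals.
From Coquelicot Require Import Coquelicot.
Open Scope R_scope.

Definition rect (c : R) (d e f : Rbar) (x y : R) : Prop :=
  Rbar_lt c x /\ Rbar_lt x d /\ Rbar_lt e y /\ Rbar_lt y f.

Definition dLx (L : R -> R -> R) (x y : R) : R := Derive (fun u => L u y) x.
Definition dLy (L : R -> R -> R) (x y : R) : R := Derive (fun v => L x v) y.

Definition C1_on (O : R -> R -> Prop) (L : R -> R -> R) : Prop :=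
  forall x y, O x y ->
    ex_derive (fun u => L u y) x /\ ex_derive (fun v => L x v) y /\
    continuous (fun p : R * R => dLx L (fst p) (snd p)) (x, y) /\
    continuous (fun p : R * R => dLy L (fst p) (snd p)) (x, y).

Definition convex_on (O : R -> R -> Prop) (L : R -> R -> R) : Prop :=
  forall x1 x2 h1 h2, O x1 x2 -> O (x1 + h1) (x2 + h2) ->
    L (x1 + h1) (x2 + h2) - L x1 x2 >= dLx L x1 x2 * h1 + dLy L x1 x2 * h2.

Definition strictly_convex_on (O : R -> R -> Prop) (L : R -> R -> R) : Prop :=
  convex_on O L /\
  forall x1 x2 h1 h2, O x1 x2 -> O (x1 + h1) (x2 + h2) ->
    L (x1 + h1) (x2 + h2) - L x1 x2 = dLx L x1 x2 * h1 + dLy L x1 x2 * h2 ->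
    h1 = 0 /\ h2 = 0.

(* continuity / derivative of f at t relative to the set D (one-sided at endpoints) *)
Definition cont_within (D : R -> Prop) (f : R -> R) (t : R) : Prop :=
  filterlim f (within D (locally t)) (locally (f t)).

Definition deriv_within (D : R -> Prop) (f : R -> R) (t l : R) : Prop :=
  filterlim (fun h => (f (t + h) - f t) / h)
    (within (fun h => h <> 0 /\ D (t + h)) (locally 0)) (locally l).

Definition cc (a b : R) (t : R) : Prop := a <= t <= b.
Definition oc (a b : R) (t : R) : Prop := a < t <= b.

(* the (possibly improper at a) integral int_a^b f exists and equals l:
   f is Riemann integrable on every [s,b], a < s <= b, and int_s^b f -> l as s -> a+ *)
Definition impint (f : R -> R) (a b l : R) : Prop :=
  (forall s, a < s <= b -> ex_RInt f s b) /\
  filterlim (fun s => RInt f s b) (at_right a) (locally l).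

Definition action (L : R -> R -> R) (a b : R) (g dg : R -> R) (l : R) : Prop :=
  impint (fun t => L (g t) (dg t)) a b l.

Definition inX (O : R -> R -> Prop) (L : R -> R -> R) (a b alpha beta : R)
    (g dg : R -> R) : Prop :=
  (forall t, cc a b t -> cont_within (cc a b) g t) /\
  (forall t, oc a b t -> deriv_within (cc a b) g t (dg t)) /\
  (forall t, oc a b t -> cont_within (oc a b) dg t) /\
  (forall t, oc a b t -> O (g t) (dg t)) /\
  g a = alpha /\ g b = beta /\
  (exists l, action L a b g dg l).

(* Main.v *)
Require Import Defs.
From Stdlib Require Import Reals Lra.
From Coquelicot Require Import Coquelicot.
Open Scope R_scope.
From Coquelicot Require Import Coquelicot.
From Stdlib Require Import Reals Lra.
Open Scope R_scope.
Lemma prod_le (x y : R) : filter_le (filter_prod (locally x) (locally y)) (locally (x,y)).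
Proof.
  intros P [eps Heps].
  exists (ball x eps) (ball y eps).
  - exists eps; auto.
  - exists eps; auto.
  - intros u v Hu Hv. apply (Heps (u,v)). split; auto.
Qed.
Lemma lim_comp2 {T} {F : (T -> Prop) -> Prop} {FF: Filter F} (H : R*R -> R) (u v : T -> R) x y :
 filterlim u F (locally x) -> filterlim v F (locally y) -> continuous H (x,y) -> filterlim (fun t => H (u t, v t)) F (locally (H (x,y))).
Proof. intros Hu Hv HH. eapply filterlim_comp. apply (filterlim_pair _ _ Hu Hv).
  eapply filterlim_filter_le_1. apply prod_le. exact HH. Qed.
Lemma lim_plus {T} {F : (T -> Prop) -> Prop} {FF : Filter F} (f g : T -> R) (a b : R) : filterlim f F (locally a) -> filterlim g F (locally b) ->
  filterlim (fun t => f t + g t) F (locally (a + b)).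
Proof. intros Hf Hg. exact (filterlim_comp_2 _ _ _ Hf Hg (filterlim_plus a b)). Qed.
Lemma lim_mult {T} {F : (T -> Prop) -> Prop} {FF : Filter F} (f g : T -> R) (a b : R) : filterlim f F (locally a) -> filterlim g F (locally b) ->
  filterlim (fun t => f t * g t) F (locally (a * b)).
Proof. intros Hf Hg. exact (filterlim_comp_2 _ _ _ Hf Hg (filterlim_mult a b)). Qed.
Lemma lim_abs {T} {F : (T -> Prop) -> Prop} {FF : Filter F} (f : T -> R) (a : R) : filterlim f F (locally a) ->
  filterlim (fun t => Rabs (f t)) F (locally (Rabs a)).
Proof. intros Hf. eapply filterlim_comp; [exact Hf | exact (continuous_abs a)]. Qed.
Lemma lim_opp {T} {F : (T -> Prop) -> Prop} {FF : Filter F} (f : T -> R) (a : R) : filterlim f F (locally a) ->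
  filterlim (fun t => - f t) F (locally (- a)).
Proof. intros Hf. eapply filterlim_comp; [exact Hf | exact (filterlim_opp a)]. Qed.
Lemma lim_minus {T} {F : (T -> Prop) -> Prop} {FF : Filter F} (f g : T -> R) (a b : R) : filterlim f F (locally a) -> filterlim g F (locally b) ->
  filterlim (fun t => f t - g t) F (locally (a - b)).
Proof. intros Hf Hg. apply lim_plus; auto. apply lim_opp; auto. Qed.
Lemma lim_eq {T} {F : (T -> Prop) -> Prop} {FF : Filter F} (f : T -> R) (a b : R) : a = b -> filterlim f F (locally a) -> filterlim f F (locally b).
Proof. intros ->; auto. Qed.

Lemma mul_ge_abs a h : a * h >= - (Rabs a * Rabs h).
Proof. pose proof (Rle_abs (-(a*h))). rewrite Rabs_Ropp, Rabs_mult in H. lra. Qed.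

Lemma Lcont_along {T} {F : (T -> Prop) -> Prop} {FF : Filter F}
  (O : R -> R -> Prop) (L : R -> R -> R) (u v : T -> R) x y :
  convex_on O L -> C1_on O L -> O x y -> F (fun t => O (u t) (v t)) ->
  filterlim u F (locally x) -> filterlim v F (locally y) ->
  filterlim (fun t => L (u t) (v t)) F (locally (L x y)).
Proof.
  intros Hcv HC1 Oxy HO Hu Hv.
  destruct (HC1 x y Oxy) as (_ & _ & HcA & HcB).
  pose proof (lim_comp2 _ u v x y Hu Hv HcA) as HA. simpl in HA.
  pose proof (lim_comp2 _ u v x y Hu Hv HcB) as HB. simpl in HB.
  set (U := fun t => (Rabs (dLx L x y) + Rabs (dLx L (u t) (v t))) * Rabs (u t - x)
     + (Rabs (dLy L x y) + Rabs (dLy L (u t) (v t))) * Rabs (v t - y)).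
  assert (HU : filterlim U F (locally 0)).
  { apply (lim_eq _ ((Rabs (dLx L x y) + Rabs (dLx L x y)) * Rabs (x - x) +
        (Rabs (dLy L x y) + Rabs (dLy L x y)) * Rabs (y - y))).
    { rewrite !Rminus_diag, Rabs_R0; ring. }
    unfold U. apply lim_plus; apply lim_mult.
    - apply lim_plus. apply filterlim_const. apply lim_abs, HA.
    - apply lim_abs, lim_minus; auto. apply filterlim_const.
    - apply lim_plus. apply filterlim_const. apply lim_abs, HB.
    - apply lim_abs, lim_minus; auto. apply filterlim_const. }
  refine (filterlim_le_le (F:=F) (fun t => L x y - U t) _ (fun t => L x y + U t) (Finite (L x y)) _ _ _).
  - apply filter_imp with (2 := HO). intros t Ot.
    pose proof (Hcv x y (u t - x) (v t - y) Oxy) as H1.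
    replace (x + (u t - x)) with (u t) in H1 by ring.
    replace (y + (v t - y)) with (v t) in H1 by ring.
    specialize (H1 Ot).
    pose proof (Hcv (u t) (v t) (x - u t) (y - v t) Ot) as H2.
    replace (u t + (x - u t)) with x in H2 by ring.
    replace (v t + (y - v t)) with y in H2 by ring.
    specialize (H2 Oxy).
    pose proof (mul_ge_abs (dLx L x y) (u t - x)).
    pose proof (mul_ge_abs (dLy L x y) (v t - y)).
    pose proof (mul_ge_abs (dLx L (u t) (v t)) (x - u t)).
    pose proof (mul_ge_abs (dLy L (u t) (v t)) (y - v t)).
    rewrite (Rabs_minus_sym x), (Rabs_minus_sym y) in *.
    pose proof (Rabs_pos (dLx L x y)). pose proof (Rabs_pos (dLy L x y)).
    pose proof (Rabs_pos (dLx L (u t) (v t))). pose proof (Rabs_pos (dLy L (u t) (v t))).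
    pose proof (Rabs_pos (u t - x)). pose proof (Rabs_pos (v t - y)).
    unfold U. split; nra.
  - apply (lim_eq _ (L x y - 0)). ring. apply lim_minus; auto. apply filterlim_const.
  - apply (lim_eq _ (L x y + 0)). ring. apply lim_plus; auto. apply filterlim_const.
Qed.
Lemma ball_R x e y : ball x e y <-> Rabs (y - x) < e.
Proof. unfold ball; simpl; unfold AbsRing_ball, abs, minus, plus, opp; simpl. tauto. Qed.

Lemma wle (D1 D2 : R -> Prop) t : locally t (fun s => D2 s -> D1 s) ->
  filter_le (within D2 (locally t)) (within D1 (locally t)).
Proof.
  intros H P HP. unfold within in *.
  apply filter_imp with (2 := filter_and _ _ H HP). intros s [H1 H2] Hs; auto.
Qed.

Lemma lle (D1 : R -> Prop) t : locally t D1 -> filter_le (locally t) (within D1 (locally t)).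
Proof.
  intros H P HP. unfold within in *.
  apply filter_imp with (2 := filter_and _ _ H HP). intros s [H1 H2]; auto.
Qed.

Lemma loc_int a b t : a < t < b -> locally t (fun s => a < s < b).
Proof. intros. apply (locally_interval _ t a b); simpl; try lra. intros; simpl in *; lra. Qed.

Lemma dw_derive (D : R -> Prop) f t l a b : a < t < b -> (forall s, a < s < b -> D s) ->
  deriv_within D f t l -> is_derive f t l.
Proof.
  intros Ht HD Hd. apply is_derive_Reals. intros eps Heps.
  destruct (proj1 (filterlim_locally _ _) Hd (mkposreal eps Heps)) as [del Hdel].
  assert (Hp : 0 < Rmin del (Rmin (t - a) (b - t))).
  { pose proof (cond_pos del). repeat apply Rmin_pos; lra. }
  exists (mkposreal _ Hp). intros h Hh0 Hh. simpl in Hh.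
  pose proof (Rmin_l del (Rmin (t - a) (b - t))).
  pose proof (Rmin_r del (Rmin (t - a) (b - t))).
  pose proof (Rmin_l (t - a) (b - t)). pose proof (Rmin_r (t - a) (b - t)).
  assert (Hb : ball 0 del h). { apply ball_R. rewrite Rminus_0_r. lra. }
  specialize (Hdel h Hb). simpl in Hdel.
  assert (HD' : D (t + h)). { apply HD. destruct (Rabs_def2 _ _ Hh) as [? ?]. lra. }
  specialize (Hdel (conj Hh0 HD')). apply ball_R in Hdel. exact Hdel.
Qed.

Definition psi L (g dg h : R -> R) t := dLy L (g t) (dg t) * (h t - g t).
Definition Dpsi L (g dg h dh : R -> R) t :=
  dLx L (g t) (dg t) * (h t - g t) + dLy L (g t) (dg t) * (dh t - dg t).
Definition phi L (g dg h dh : R -> R) t := L (h t) (dh t) - L (g t) (dg t).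

Definition setting O L a b alpha beta (g dg h dh : R -> R) M :=
  convex_on O L /\ C1_on O L /\ a < b /\ (forall x y, O x y -> Rabs (dLy L x y) <= M) /\
  inX O L a b alpha beta g dg /\ inX O L a b alpha beta h dh /\
  (forall t, oc a b t ->
     deriv_within (oc a b) (fun s => dLy L (g s) (dg s)) t (dLx L (g t) (dg t))).

Lemma cont_int (D : R -> Prop) f a b t : a < t < b -> (forall s, a < s < b -> D s) ->
  cont_within D f t -> continuous f t.
Proof.
  intros Ht HD Hc. unfold cont_within in Hc. eapply filterlim_filter_le_1; [|exact Hc].
  apply lle. apply filter_imp with (2 := loc_int a b t Ht). auto.
Qed.

Lemma regA O L a b alpha beta g dg h dh M t : setting O L a b alpha beta g dg h dh M -> a < t < b ->
  continuous g t /\ continuous dg t /\ continuous h t /\ continuous dh t /\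
  is_derive (psi L g dg h) t (Dpsi L g dg h dh t) /\ continuous (Dpsi L g dg h dh) t /\
  continuous (phi L g dg h dh) t.
Proof.
  intros (Hcv & HC1 & Hab & HM & Xg & Xh & HEL) Ht.
  destruct Xg as (Gc & Gd & Gdc & GO & Ga & Gb & _).
  destruct Xh as (Hc & Hd & Hdc & HO & Ha & Hb & _).
  assert (occ : forall s, a < s < b -> oc a b s) by (intros; unfold oc; lra).
  assert (ccc : forall s, a < s < b -> cc a b s) by (intros; unfold cc; lra).
  assert (cg : continuous g t) by (apply (cont_int (cc a b) g a b t Ht ccc), Gc, ccc, Ht).
  assert (cdg : continuous dg t) by (apply (cont_int (oc a b) dg a b t Ht occ), Gdc, occ, Ht).
  assert (ch : continuous h t) by (apply (cont_int (cc a b) h a b t Ht ccc), Hc, ccc, Ht).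
  assert (cdh : continuous dh t) by (apply (cont_int (oc a b) dh a b t Ht occ), Hdc, occ, Ht).
  assert (Og : O (g t) (dg t)) by (apply GO, occ, Ht).
  destruct (HC1 _ _ Og) as (_ & _ & cA & cB).
  pose proof (lim_comp2 _ g dg _ _ cg cdg cA) as cA'. simpl in cA'.
  pose proof (lim_comp2 _ g dg _ _ cg cdg cB) as cB'. simpl in cB'.
  refine (conj cg (conj cdg (conj ch (conj cdh (conj _ (conj _ _)))))).
  all: cycle 0.
  - unfold psi, Dpsi.
    pose proof (dw_derive (oc a b) _ t _ a b Ht occ (HEL t (occ t Ht))) as dp.
    pose proof (dw_derive (cc a b) _ t _ a b Ht ccc (Gd t (occ t Ht))) as dgd.
    pose proof (dw_derive (cc a b) _ t _ a b Ht ccc (Hd t (occ t Ht))) as dhd.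
    pose proof (is_derive_minus _ _ _ _ _ dhd dgd) as dq.
    pose proof (is_derive_mult _ _ _ _ _ dp dq) as dpq.
    apply dpq. intros; apply Rmult_comm.
  - unfold continuous, Dpsi. apply lim_plus; apply lim_mult; auto; apply lim_minus; auto.
  - unfold continuous, phi. apply lim_minus.
    + apply (Lcont_along O L h dh); [auto|auto|apply HO, occ, Ht| |auto|auto].
      apply filter_imp with (2 := loc_int a b t Ht). intros; apply HO, occ; auto.
    + apply (Lcont_along O L g dg); [auto|auto|auto| |auto|auto].
      apply filter_imp with (2 := loc_int a b t Ht). intros; apply GO, occ; auto.
Qed.

Lemma conv_pt O L a b alpha beta g dg h dh M t : setting O L a b alpha beta g dg h dh M ->
  oc a b t -> Dpsi L g dg h dh t <= phi L g dg h dh t.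
Proof.
  intros (Hcv & HC1 & Hab & HM & Xg & Xh & HEL) Ht.
  destruct Xg as (_ & _ & _ & GO & _). destruct Xh as (_ & _ & _ & HO & _).
  pose proof (Hcv (g t) (dg t) (h t - g t) (dh t - dg t) (GO t Ht)) as H.
  replace (g t + (h t - g t)) with (h t) in H by ring.
  replace (dg t + (dh t - dg t)) with (dh t) in H by ring.
  specialize (H (HO t Ht)). unfold Dpsi, phi. lra.
Qed.

Lemma exRI O L a b alpha beta g dg h dh M s u : setting O L a b alpha beta g dg h dh M ->
  a < s <= u -> u <= b -> ex_RInt (phi L g dg h dh) s u.
Proof.
  intros (Hcv & HC1 & Hab & HM & Xg & Xh & HEL) Hs Hu.
  destruct Xg as (_ & _ & _ & _ & _ & _ & [lg [Ig _]]).
  destruct Xh as (_ & _ & _ & _ & _ & _ & [lh [Ih _]]).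
  assert (E : ex_RInt (phi L g dg h dh) s b).
  { apply (ex_RInt_minus (fun t => L (h t) (dh t)) (fun t => L (g t) (dg t))).
    apply Ih; lra. apply Ig; lra. }
  apply (@ex_RInt_Chasles_1 R_CompleteNormedModule _ s u b); [lra | exact E].
Qed.

Lemma claim1 O L a b alpha beta g dg h dh M s u : setting O L a b alpha beta g dg h dh M ->
  a < s <= u -> u < b ->
  RInt (Dpsi L g dg h dh) s u = psi L g dg h u - psi L g dg h s /\
  ex_RInt (Dpsi L g dg h dh) s u /\
  psi L g dg h u - psi L g dg h s <= RInt (phi L g dg h dh) s u.
Proof.
  intros S Hs Hu.
  assert (HI : is_RInt (Dpsi L g dg h dh) s u (psi L g dg h u - psi L g dg h s)).
  { apply (is_RInt_derive (psi L g dg h) (Dpsi L g dg h dh)).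
    - intros x Hx. rewrite Rmin_left, Rmax_right in Hx by lra.
      apply (regA O L a b alpha beta g dg h dh M x S); lra.
    - intros x Hx. rewrite Rmin_left, Rmax_right in Hx by lra.
      apply (regA O L a b alpha beta g dg h dh M x S); lra. }
  assert (E : RInt (Dpsi L g dg h dh) s u = psi L g dg h u - psi L g dg h s)
    by (apply is_RInt_unique; exact HI).
  split; [exact E|]. split; [eexists; exact HI|].
  rewrite <- E. apply RInt_le; [lra| eexists; exact HI | apply (exRI O L a b alpha beta g dg h dh M); auto; lra |].
  intros x Hx. apply (conv_pt O L a b alpha beta g dg h dh M x S). unfold oc; lra.
Qed.

Lemma loc_gt a t : a < t -> locally t (fun s => a < s).
Proof. intros. apply (locally_interval _ t a p_infty); simpl; auto. Qed.
Lemma loc_lt b t : t < b -> locally t (fun s => s < b).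
Proof. intros. apply (locally_interval _ t m_infty b); simpl; auto. Qed.

Lemma le_left_cc a b : a < b -> filter_le (at_left b) (within (cc a b) (locally b)).
Proof. intros. apply wle. apply filter_imp with (2 := loc_gt a b H). intros; unfold cc; lra. Qed.
Lemma le_left_oc a b : a < b -> filter_le (at_left b) (within (oc a b) (locally b)).
Proof. intros. apply wle. apply filter_imp with (2 := loc_gt a b H). intros; unfold oc; lra. Qed.
Lemma le_right_cc a b : a < b -> filter_le (at_right a) (within (cc a b) (locally a)).
Proof. intros. apply wle. apply filter_imp with (2 := loc_lt b a H). intros; unfold cc; lra. Qed.
Lemma le_oc_cc a b : filter_le (within (oc a b) (locally b)) (within (cc a b) (locally b)).
Proof. apply wle. apply filter_forall. intros; unfold oc, cc in *; lra. Qed.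

Lemma psi_sq O L a b alpha beta g dg h dh M (F : (R -> Prop) -> Prop) {FF : Filter F} :
  setting O L a b alpha beta g dg h dh M ->
  F (fun u => oc a b u) -> filterlim (fun u => h u - g u) F (locally 0) ->
  filterlim (psi L g dg h) F (locally 0).
Proof.
  intros S Hoc Hq. pose proof S as (Hcv & HC1 & Hab & HM & Xg & Xh & HEL).
  destruct Xg as (_ & _ & _ & GO & _).
  refine (filterlim_le_le (F:=F) (fun u => - (M * Rabs (h u - g u))) _ (fun u => M * Rabs (h u - g u)) (Finite 0) _ _ _).
  - apply filter_imp with (2 := Hoc). intros u Hu.
    pose proof (HM _ _ (GO u Hu)). unfold psi.
    pose proof (Rabs_pos (h u - g u)).
    pose proof (Rabs_mult (dLy L (g u) (dg u)) (h u - g u)).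
    assert (Rabs (dLy L (g u) (dg u)) * Rabs (h u - g u) <= M * Rabs (h u - g u)) by nra.
    pose proof (Rle_abs (dLy L (g u) (dg u) * (h u - g u))).
    pose proof (Rle_abs (- (dLy L (g u) (dg u) * (h u - g u)))). rewrite Rabs_Ropp in *.
    split; lra.
  - apply (lim_eq _ (- (M * Rabs 0))). rewrite Rabs_R0; ring. apply lim_opp, lim_mult.
    apply filterlim_const. apply lim_abs, Hq.
  - apply (lim_eq _ (M * Rabs 0)). rewrite Rabs_R0; ring. apply lim_mult.
    apply filterlim_const. apply lim_abs, Hq.
Qed.

Lemma psi_lim_b O L a b alpha beta g dg h dh M : setting O L a b alpha beta g dg h dh M ->
  filterlim (psi L g dg h) (at_left b) (locally 0).
Proof.
  intros S. pose proof S as (Hcv & HC1 & Hab & HM & Xg & Xh & HEL).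
  destruct Xg as (Gc & _ & _ & _ & Ga & Gb & _). destruct Xh as (Hc & _ & _ & _ & Ha & Hb & _).
  apply (psi_sq O L a b alpha beta g dg h dh M _ S).
  - apply filter_imp with (2 := loc_gt a b Hab). intros; unfold oc; lra.
  - apply (lim_eq _ (h b - g b)). rewrite Gb, Hb; ring. apply lim_minus.
    + eapply filterlim_filter_le_1. apply (le_left_cc a b Hab). apply Hc. unfold cc; lra.
    + eapply filterlim_filter_le_1. apply (le_left_cc a b Hab). apply Gc. unfold cc; lra.
Qed.

Lemma psi_lim_a O L a b alpha beta g dg h dh M : setting O L a b alpha beta g dg h dh M ->
  filterlim (psi L g dg h) (at_right a) (locally 0).
Proof.
  intros S. pose proof S as (Hcv & HC1 & Hab & HM & Xg & Xh & HEL).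
  destruct Xg as (Gc & _ & _ & _ & Ga & Gb & _). destruct Xh as (Hc & _ & _ & _ & Ha & Hb & _).
  apply (psi_sq O L a b alpha beta g dg h dh M _ S).
  - apply filter_imp with (2 := loc_lt b a Hab). intros; unfold oc; lra.
  - apply (lim_eq _ (h a - g a)). rewrite Ga, Ha; ring. apply lim_minus.
    + eapply filterlim_filter_le_1. apply (le_right_cc a b Hab). apply Hc. unfold cc; lra.
    + eapply filterlim_filter_le_1. apply (le_right_cc a b Hab). apply Gc. unfold cc; lra.
Qed.

Lemma phi_cont_b O L a b alpha beta g dg h dh M : setting O L a b alpha beta g dg h dh M ->
  filterlim (phi L g dg h dh) (within (oc a b) (locally b)) (locally (phi L g dg h dh b)).
Proof.
  intros S. pose proof S as (Hcv & HC1 & Hab & HM & Xg & Xh & HEL).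
  destruct Xg as (Gc & _ & Gdc & GO & _). destruct Xh as (Hc & _ & Hdc & HO & _).
  assert (ob : oc a b b) by (unfold oc; lra).
  assert (cb : cc a b b) by (unfold cc; lra).
  unfold phi. apply lim_minus.
  - apply (Lcont_along O L h dh); auto.
    + unfold within. apply filter_forall. intros; apply HO; auto.
    + eapply filterlim_filter_le_1. apply le_oc_cc. apply Hc; auto.
    + apply Hdc; auto.
  - apply (Lcont_along O L g dg); auto.
    + unfold within. apply filter_forall. intros; apply GO; auto.
    + eapply filterlim_filter_le_1. apply le_oc_cc. apply Gc; auto.
    + apply Gdc; auto.
Qed.

Lemma int_lim_b O L a b alpha beta g dg h dh M : setting O L a b alpha beta g dg h dh M ->
  filterlim (fun u => RInt (phi L g dg h dh) u b) (at_left b) (locally 0).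
Proof.
  intros S. pose proof S as (Hcv & HC1 & Hab & HM & Xg & Xh & HEL).
  pose proof (phi_cont_b O L a b alpha beta g dg h dh M S) as Hc.
  apply filterlim_locally. intros eps.
  destruct (proj1 (filterlim_locally _ _) Hc (mkposreal 1 Rlt_0_1)) as [del Hdel].
  set (K := Rabs (phi L g dg h dh b) + 1).
  assert (HK : 0 < K) by (pose proof (Rabs_pos (phi L g dg h dh b)); unfold K; lra).
  assert (Hr : 0 < Rmin del (Rmin (b - a) (eps / K))).
  { pose proof (cond_pos del). pose proof (cond_pos eps).
    repeat apply Rmin_pos; try lra. apply Rdiv_lt_0_compat; lra. }
  exists (mkposreal _ Hr). intros u Hu0 Hub. simpl in Hu0. pose proof (proj1 (ball_R b _ u) Hu0) as Hu.
  pose proof (Rmin_l del (Rmin (b - a) (eps / K))).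
  pose proof (Rmin_r del (Rmin (b - a) (eps / K))).
  pose proof (Rmin_l (b - a) (eps / K)). pose proof (Rmin_r (b - a) (eps / K)).
  rewrite Rabs_minus_sym, Rabs_pos_eq in Hu by lra.
  apply ball_R. rewrite Rminus_0_r.
  assert (Hle : Rabs (RInt (phi L g dg h dh) u b) <= (b - u) * K).
  { apply abs_RInt_le_const. lra. apply (exRI O L a b alpha beta g dg h dh M); auto; lra.
    intros t Ht.
    assert (Hb : ball b del t). { apply ball_R. rewrite Rabs_minus_sym, Rabs_pos_eq by lra. lra. }
    specialize (Hdel t Hb). simpl in Hdel. assert (oc a b t) by (unfold oc; lra).
    specialize (Hdel H3). pose proof (proj1 (ball_R _ _ _) Hdel) as Hdel2.
    pose proof (Rabs_triang_inv (phi L g dg h dh t) (phi L g dg h dh b)). unfold K; lra. }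
  assert ((b - u) * K < eps).
  { apply Rlt_le_trans with ((eps / K) * K).
    apply Rmult_lt_compat_r; lra. right; field; lra. }
  lra.
Qed.

Lemma claim2 O L a b alpha beta g dg h dh M s : setting O L a b alpha beta g dg h dh M ->
  a < s < b -> 0 <= RInt (phi L g dg h dh) s b + psi L g dg h s.
Proof.
  intros S Hs. pose proof S as (Hcv & HC1 & Hab & HM & Xg & Xh & HEL).
  assert (Hl := filterlim_le (F := at_left b)
    (fun u => psi L g dg h u - psi L g dg h s + RInt (phi L g dg h dh) u b)
    (fun _ => RInt (phi L g dg h dh) s b) (Finite (0 - psi L g dg h s + 0)) (Finite (RInt (phi L g dg h dh) s b))).
  simpl in Hl. cut (0 - psi L g dg h s + 0 <= RInt (phi L g dg h dh) s b). lra.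
  apply Hl.
  - apply filter_imp with (2 := loc_gt s b (proj2 Hs)). intros u Hu Hub.
    destruct (claim1 O L a b alpha beta g dg h dh M s u S) as (_ & _ & H1); try lra.
    rewrite <- (RInt_Chasles (phi L g dg h dh) s u b).
    simpl. change (plus ?x ?y) with (x + y). lra.
    apply (exRI O L a b alpha beta g dg h dh M); auto; lra.
    apply (exRI O L a b alpha beta g dg h dh M); auto; lra.
  - apply lim_plus. apply lim_minus. apply (psi_lim_b O L a b alpha beta g dg h dh M S).
    apply filterlim_const. apply (int_lim_b O L a b alpha beta g dg h dh M S).
  - apply filterlim_const.
Qed.

Lemma claim3 O L a b alpha beta g dg h dh M lg lh : setting O L a b alpha beta g dg h dh M ->
  action L a b g dg lg -> action L a b h dh lh ->
  filterlim (fun s => RInt (phi L g dg h dh) s b + psi L g dg h s) (at_right a) (locally (lh - lg)).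
Proof.
  intros S [Ig Lg] [Ih Lh]. pose proof S as (Hcv & HC1 & Hab & HM & Xg & Xh & HEL).
  apply (filterlim_ext_loc (fun s => (RInt (fun t => L (h t) (dh t)) s b - RInt (fun t => L (g t) (dg t)) s b) + psi L g dg h s)).
  - apply filter_imp with (2 := loc_lt b a Hab). intros s Hsb Has.
    unfold phi. rewrite (RInt_minus (fun t => L (h t) (dh t)) (fun t => L (g t) (dg t))).
    reflexivity. apply Ih; lra. apply Ig; lra.
  - apply (lim_eq _ (lh - lg + 0)). ring. apply lim_plus. apply lim_minus; auto.
    apply (psi_lim_a O L a b alpha beta g dg h dh M S).
Qed.

Lemma minimal O L a b alpha beta g dg h dh M lg lh : setting O L a b alpha beta g dg h dh M ->
  action L a b g dg lg -> action L a b h dh lh -> lg <= lh.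
Proof.
  intros S Ag Ah. pose proof S as (Hcv & HC1 & Hab & HM & _).
  assert (Hl := filterlim_le (F := at_right a) (fun _ => 0)
    (fun s => RInt (phi L g dg h dh) s b + psi L g dg h s) (Finite 0) (Finite (lh - lg))).
  simpl in Hl. cut (0 <= lh - lg). lra. apply Hl.
  - apply filter_imp with (2 := loc_lt b a Hab). intros s Hsb Has.
    apply (claim2 O L a b alpha beta g dg h dh M s S); lra.
  - apply filterlim_const.
  - apply (claim3 O L a b alpha beta g dg h dh M lg lh S Ag Ah).
Qed.

Lemma lemE (k : R -> R) a b t : a < t < b -> continuous k t -> (forall s, a < s < b -> 0 <= k s) ->
  (forall s u, a < s < u -> u < b -> ex_RInt k s u /\ RInt k s u = 0) -> k t = 0.
Proof.
  intros Ht Hc Hpos Hint.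
  destruct (Rle_lt_or_eq_dec 0 (k t) (Hpos t Ht)) as [Hlt|]; [|auto].
  exfalso.
  assert (He : 0 < k t / 2) by lra.
  destruct (proj1 (filterlim_locally _ _) Hc (mkposreal _ He)) as [del Hdel].
  set (r := Rmin del (Rmin (t - a) (b - t)) / 2).
  assert (Hr : 0 < r).
  { unfold r. pose proof (cond_pos del). assert (0 < Rmin del (Rmin (t - a) (b - t))) by (repeat apply Rmin_pos; lra). lra. }
  assert (Hr2 : r < del /\ r < t - a /\ r < b - t).
  { unfold r. pose proof (Rmin_l del (Rmin (t - a) (b - t))).
    pose proof (Rmin_r del (Rmin (t - a) (b - t))).
    pose proof (Rmin_l (t - a) (b - t)). pose proof (Rmin_r (t - a) (b - t)).
    pose proof (cond_pos del). assert (0 < Rmin del (Rmin (t - a) (b - t))) by (repeat apply Rmin_pos; lra). lra. }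
  destruct (Hint (t - r) (t + r)) as [Hex H0]; try lra.
  assert (RInt (fun _ => k t / 2) (t - r) (t + r) <= RInt k (t - r) (t + r)).
  { apply RInt_le; auto; try lra. apply ex_RInt_const.
    intros x Hx. assert (Hb : ball t del x). { apply ball_R. apply Rabs_def1; lra. }
    specialize (Hdel x Hb). pose proof (proj1 (ball_R _ _ _) Hdel) as Hd. simpl in Hd.
    destruct (Rabs_def2 _ _ Hd). lra. }
  rewrite RInt_const, H0 in H. unfold scal in H; simpl in H; unfold mult in H; simpl in H.
  nra.
Qed.

Lemma unique O L a b alpha beta g dg h dh M lg lh : setting O L a b alpha beta g dg h dh M ->
  strictly_convex_on O L -> action L a b g dg lg -> action L a b h dh lh -> lh <= lg ->
  forall t, cc a b t -> h t = g t.
Proof.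
  intros S Hsc Ag Ah Hle. pose proof S as (Hcv & HC1 & Hab & HM & Xg & Xh & HEL).
  destruct Xg as (_ & _ & _ & GO & Ga & Gb & _). destruct Xh as (_ & _ & _ & HO & Ha & Hb & _).
  set (G := fun s => RInt (phi L g dg h dh) s b + psi L g dg h s).
  assert (Gmono : forall s' s, a < s' <= s -> s < b -> G s <= G s').
  { intros s' s H1 H2. unfold G.
    destruct (claim1 O L a b alpha beta g dg h dh M s' s S) as (_ & _ & H3); try lra.
    rewrite <- (RInt_Chasles (phi L g dg h dh) s' s b).
    simpl. change (plus ?x ?y) with (x + y). lra.
    apply (exRI O L a b alpha beta g dg h dh M); auto; lra.
    apply (exRI O L a b alpha beta g dg h dh M); auto; lra. }
  assert (G0 : forall s, a < s < b -> G s = 0).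
  { intros s Hs. apply Rle_antisym.
    - assert (Hl := filterlim_le (F := at_right a) (fun _ => G s) G (Finite (G s)) (Finite (lh - lg))).
      simpl in Hl. cut (G s <= lh - lg). lra. apply Hl.
      + apply filter_imp with (2 := loc_lt s a (proj1 Hs)). intros s' Hs' Has.
        apply Gmono; lra.
      + apply filterlim_const.
      + apply (claim3 O L a b alpha beta g dg h dh M lg lh S Ag Ah).
    - apply (claim2 O L a b alpha beta g dg h dh M s S Hs). }
  assert (Hint : forall t, a < t < b -> phi L g dg h dh t = Dpsi L g dg h dh t).
  { intros t Ht.
    cut ((fun x => phi L g dg h dh x - Dpsi L g dg h dh x) t = 0). simpl; lra.
    apply (lemE _ a b t Ht).
    - destruct (regA O L a b alpha beta g dg h dh M t S Ht) as (_ & _ & _ & _ & _ & c1 & c2).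
      unfold continuous. apply lim_minus; auto.
    - intros s Hs. pose proof (conv_pt O L a b alpha beta g dg h dh M s S). unfold oc in H; lra.
    - intros s u H1 H2.
      destruct (claim1 O L a b alpha beta g dg h dh M s u S) as (E1 & E2 & _); try lra.
      assert (E3 : ex_RInt (phi L g dg h dh) s u) by (apply (exRI O L a b alpha beta g dg h dh M); auto; lra).
      split.
      + apply (ex_RInt_minus (phi L g dg h dh) (Dpsi L g dg h dh)); auto.
      + rewrite (RInt_minus (phi L g dg h dh) (Dpsi L g dg h dh)) by auto. rewrite E1.
        pose proof (G0 s (conj (proj1 H1) (Rlt_trans _ _ _ (proj2 H1) H2))) as Gs.
        pose proof (G0 u (conj (Rlt_trans _ _ _ (proj1 H1) (proj2 H1)) H2)) as Gu.
        unfold G in Gs, Gu.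
        rewrite <- (RInt_Chasles (phi L g dg h dh) s u b) in Gs; auto.
        simpl in Gs. change (plus ?x ?y) with (x + y) in Gs.
        unfold minus, plus, opp; simpl. lra.
        apply (exRI O L a b alpha beta g dg h dh M); auto; lra. }
  intros t [Ht1 Ht2].
  destruct (Rle_lt_or_eq_dec _ _ Ht1) as [Hat|Hat]; [|subst t; congruence].
  destruct (Rle_lt_or_eq_dec _ _ Ht2) as [Htb|Htb]; [|subst t; congruence].
  assert (Ot : oc a b t) by (unfold oc; lra).
  pose proof (Hint t (conj Hat Htb)) as E. unfold phi, Dpsi in E.
  destruct (proj2 Hsc (g t) (dg t) (h t - g t) (dh t - dg t) (GO t Ot)) as [E1 _].
  - replace (g t + (h t - g t)) with (h t) by ring.
    replace (dg t + (dh t - dg t)) with (dh t) by ring. apply HO; auto.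
  - replace (g t + (h t - g t)) with (h t) by ring.
    replace (dg t + (dh t - dg t)) with (dh t) by ring. lra.
  - lra.
Qed.

Theorem proposition2 (c : R) (d e f : Rbar) (L : R -> R -> R)
  (a b alpha beta : R) (g dg : R -> R) :
  C1_on (rect c d e f) L ->
  a < b ->
  (exists M, forall x y, rect c d e f x y -> Rabs (dLy L x y) <= M) ->
  inX (rect c d e f) L a b alpha beta g dg ->
  (forall t, oc a b t ->
     deriv_within (oc a b) (fun s => dLy L (g s) (dg s)) t (dLx L (g t) (dg t))) ->
  (convex_on (rect c d e f) L ->
     forall lg, action L a b g dg lg ->
     forall h dh lh, inX (rect c d e f) L a b alpha beta h dh ->
       action L a b h dh lh -> lg <= lh) /\
  (strictly_convex_on (rect c d e f) L ->
     (forall lg, action L a b g dg lg ->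
      forall h dh lh, inX (rect c d e f) L a b alpha beta h dh ->
        action L a b h dh lh -> lg <= lh) /\
     (forall h dh lh, inX (rect c d e f) L a b alpha beta h dh ->
        action L a b h dh lh ->
        (forall k dk lk, inX (rect c d e f) L a b alpha beta k dk ->
           action L a b k dk lk -> lh <= lk) ->
        forall t, cc a b t -> h t = g t)).
Proof.
  intros HC1 Hab [M HM] Xg HEL.
  assert (P1 : convex_on (rect c d e f) L ->
     forall lg, action L a b g dg lg ->
     forall h dh lh, inX (rect c d e f) L a b alpha beta h dh ->
       action L a b h dh lh -> lg <= lh).
  { intros Hcv lg Ag h dh lh Xh Ah.
    apply (minimal (rect c d e f) L a b alpha beta g dg h dh M lg lh); auto.
    exact (conj Hcv (conj HC1 (conj Hab (conj HM (conj Xg (conj Xh HEL)))))). }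
  split; [exact P1|]. intros Hsc. split.
  - apply P1, Hsc.
  - intros h dh lh Xh Ah Hmin.
    pose proof Xg as (_ & _ & _ & _ & _ & _ & [lg Ag]).
    apply (unique (rect c d e f) L a b alpha beta g dg h dh M lg lh); auto.
    exact (conj (proj1 Hsc) (conj HC1 (conj Hab (conj HM (conj Xg (conj Xh HEL)))))).
    apply (Hmin g dg lg Xg Ag).
Qed.
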